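(* For any Poisson $H$-pseudoalgebra $V$ and $a_1,\dots,a_m,b_1,\dots,b_n\in V$, $[(a_1\cdots a_m)*(b_1\cdots b_n)]=\sum_{i=1}^m\sum_{j=1}^n\epsilon_{ij}\,(a_1\cdots a_{i-1}a_{i+1}\cdots a_m)\,[a_i*b_j]\,(b_1\cdots b_{j-1}b_{j+1}\cdots b_n)$, where $\epsilon_{ij}=(-1)^{p(a_i)(p(a_{i+1})+\dots+p(a_m))+p(b_j)(p(b_1)+\dots+p(b_{j-1}))}$.
   Context: $H$ is a cocommutative Hopf algebra over a field $\mathbb F$ of characteristic $0$ (purely even), coproduct $\Delta(h)=h_{(1)}\otimes h_{(2)}$, antipode $S$, $h_{(1)}\otimes h_{(-2)}:=(\mathrm{id}\otimes S)\Delta(h)$. $(H\otimes H)\otimes_HV$ is the quotient of $H\otimes H\otimes V$ by $(fh_{(1)}\otimes gh_{(2)})\otimes e=(f\otimes g)\otimes he$. A Poisson $H$-pseudoalgebra is a vector superspace $V$ (parity $p$) with a left $H$-module structure, an even supercommutative associative product with $h(ab)=(h_{(1)}a)(h_{(2)}b)$, and an even pseudobracket $[a*b]\in(H\otimes H)\otimes_HV$ making $V$ a Lie $H$-pseudoalgebra ($H$-bilinearity $[fa*gb]=((f\otimes g)\otimes_H1)[a*b]$, skewsymmetry and Jacobi identity) and satisfying $[a*bc]=[a*b]c+(-1)^{p(b)p(c)}[a*c]b$. For $a,c\in V$ and $B=(f\otimes g)\otimes_Hb$, the products are $aB:=(f_{(1)}\otimes g)\otimes_H(f_{(-2)}a)b$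 and $Bc:=(f\otimes g_{(1)})\otimes_Hb(g_{(-2)}c)$, extended linearly; they are well defined and satisfy $(aB)c=a(Bc)$, which gives meaning to the triple products in the claim (empty products of elements of $V$ being omitted). *)

(* Defs.v *)
From HB Require Import structures.
From mathcomp Require Import all_boot all_order all_algebra.
Set Implicit Arguments. Unset Strict Implicit. Unset Printing Implicit Defensive.
Import GRing.Theory.
Local Open Scope ring_scope.

(* Tensor products are encoded by formal sums (lists of pure tensors).      *)
(* Two formal sums are equal in the tensor product (or in a quotient of it  *)
(* such as (H ⊗ H) ⊗_H V) iff every multilinear (and, for ⊗_H, balanced)   *)
(* map into an arbitrary F-vector space W gives the same value on them      *)
(* (universal property of the tensor product / of the quotient).            *)
(* Scalar coefficients are absorbed into one tensor factor.                 *)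

Section Defs.
Variable F : fieldType.

Definition lin1 (A W : lmodType F) (f : A -> W) :=
  forall (c : F) (x y : A), f (c *: x + y) = c *: f x + f y.

Definition bilin (A B W : lmodType F) (phi : A -> B -> W) :=
  (forall y, lin1 (fun x => phi x y)) /\ (forall x, lin1 (phi x)).

Definition trilin (A B C W : lmodType F) (phi : A -> B -> C -> W) :=
  [/\ forall y z, lin1 (fun x => phi x y z),
      forall x z, lin1 (fun y => phi x y z) &
      forall x y, lin1 (phi x y)].

Definition quadlin (A B C D W : lmodType F) (phi : A -> B -> C -> D -> W) :=
  [/\ forall y z t, lin1 (fun x => phi x y z t),
      forall x z t, lin1 (fun y => phi x y z t),
      forall x y t, lin1 (fun z => phi x y z t) &
      forall x y z, lin1 (phi x y z)].

Definition eqT2 (H : lmodType F) (s t : seq (H * H)) :=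
  forall (W : lmodType F) (phi : H -> H -> W), bilin phi ->
    \sum_(x <- s) phi x.1 x.2 = \sum_(x <- t) phi x.1 x.2.

Definition eqT3 (H : lmodType F) (s t : seq (H * H * H)) :=
  forall (W : lmodType F) (phi : H -> H -> H -> W), trilin phi ->
    \sum_(x <- s) phi x.1.1 x.1.2 x.2 = \sum_(x <- t) phi x.1.1 x.1.2 x.2.

(* Cocommutative Hopf algebra over F; cop h is a representative of Δ(h)
   (Sweedler: h_(1) ⊗ h_(2) = sum of the pairs in cop h). *)
Record cocomm_hopf (H : algType F) := CocommHopf {
  cop : H -> seq (H * H);
  cou : H -> F;
  ant : H -> H;
  cop_add : forall h k, eqT2 (cop (h + k)) (cop h ++ cop k);
  cop_scale : forall (c : F) h, eqT2 (cop (c *: h)) [seq (c *: x.1, x.2) | x <- cop h];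
  cop_coassoc : forall h,
    eqT3 [seq (y.1, y.2, x.2) | x <- cop h, y <- cop x.1]
         [seq (x.1, y.1, y.2) | x <- cop h, y <- cop x.2];
  cou_lin : forall (c : F) h k, cou (c *: h + k) = c * cou h + cou k;
  cou_l : forall h, \sum_(x <- cop h) cou x.1 *: x.2 = h;
  cou_r : forall h, \sum_(x <- cop h) cou x.2 *: x.1 = h;
  cop_mul : forall h k, eqT2 (cop (h * k)) [seq (x.1 * y.1, x.2 * y.2) | x <- cop h, y <- cop k];
  cop_one : eqT2 (cop 1) [:: (1, 1)];
  cou_mul : forall h k, cou (h * k) = cou h * cou k;
  cou_one : cou 1 = 1;
  ant_lin : forall (c : F) h k, ant (c *: h + k) = c *: ant h + ant k;
  ant_l : forall h, \sum_(x <- cop h) ant x.1 * x.2 = cou h *: 1;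
  ant_r : forall h, \sum_(x <- cop h) x.1 * ant x.2 = cou h *: 1;
  cop_cocomm : forall h, eqT2 (cop h) [seq (x.2, x.1) | x <- cop h]
}.

Section Pseudo.
Variables (H : algType F) (Hh : cocomm_hopf H) (V : lmodType F).

(* elements of (H ⊗ H) ⊗_H V and of H^{⊗3} ⊗_H V, as formal sums *)
Definition PB := seq (H * H * V).
Definition PB3 := seq (H * H * H * V).

Definition balanced2 (act : H -> V -> V) (W : lmodType F) (phi : H -> H -> V -> W) :=
  forall f g h e, \sum_(x <- cop Hh h) phi (f * x.1) (g * x.2) e = phi f g (act h e).

Definition balanced3 (act : H -> V -> V) (W : lmodType F) (phi : H -> H -> H -> V -> W) :=
  forall f g k h e,
    \sum_(x <- [seq (y.1, y.2, x.2) | x <- cop Hh h, y <- cop Hh x.1])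
       phi (f * x.1.1) (g * x.1.2) (k * x.2) e = phi f g k (act h e).

Definition eqPB (act : H -> V -> V) (s t : PB) :=
  forall (W : lmodType F) (phi : H -> H -> V -> W), trilin phi -> balanced2 act phi ->
    \sum_(x <- s) phi x.1.1 x.1.2 x.2 = \sum_(x <- t) phi x.1.1 x.1.2 x.2.

Definition eqPB3 (act : H -> V -> V) (s t : PB3) :=
  forall (W : lmodType F) (phi : H -> H -> H -> V -> W), quadlin phi -> balanced3 act phi ->
    \sum_(x <- s) phi x.1.1.1 x.1.1.2 x.1.2 x.2 = \sum_(x <- t) phi x.1.1.1 x.1.1.2 x.1.2 x.2.

Definition scalePB (c : F) (B : PB) : PB := [seq (x.1, c *: x.2) | x <- B].
Definition scalePB3 (c : F) (B : PB3) : PB3 := [seq (x.1, c *: x.2) | x <- B].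

Definition mulPBr (act : H -> V -> V) (vmul : V -> V -> V) (B : PB) (c : V) : PB :=
  [seq (x.1.1, y.1, vmul x.2 (act (ant Hh y.2) c)) | x <- B, y <- cop Hh x.1.2].
Definition mulPBl (act : H -> V -> V) (vmul : V -> V -> V) (a : V) (B : PB) : PB :=
  [seq (y.1, x.1.2, vmul (act (ant Hh y.2) a) x.2) | x <- B, y <- cop Hh x.1.1].

(* [a * [b * c]] : if [b*c] = Σ (f⊗g)⊗_H d and [a*d] = Σ (h⊗k)⊗_H e then
   [a*[b*c]] = Σ (h ⊗ f k_(1) ⊗ g k_(2)) ⊗_H e *)
Definition brL (br : V -> V -> PB) (a b c : V) : PB3 :=
  flatten [seq [seq (y.1.1, x.1.1 * z.1, x.1.2 * z.2, y.2) | y <- br a x.2, z <- cop Hh y.1.2]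
          | x <- br b c].
(* [[a * b] * c] : if [a*b] = Σ (f⊗g)⊗_H d and [d*c] = Σ (h⊗k)⊗_H e then
   [[a*b]*c] = Σ (f h_(1) ⊗ g h_(2) ⊗ k) ⊗_H e *)
Definition brR (br : V -> V -> PB) (a b c : V) : PB3 :=
  flatten [seq [seq (x.1.1 * z.1, x.1.2 * z.2, y.1.2, y.2) | y <- br x.2 c, z <- cop Hh y.1.1]
          | x <- br a b].
Definition swap12 (B : PB3) : PB3 := [seq (x.1.1.2, x.1.1.1, x.1.2, x.2) | x <- B].

Definition sgn (p q : bool) : F := (-1) ^+ (p && q).

(* Poisson H-pseudoalgebra: vpar p v means v is homogeneous of parity p. *)
Record poisson_pseudoalg := PoissonPseudoalg {
  act : H -> V -> V;
  vpar : bool -> V -> Prop;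
  vmul : V -> V -> V;
  pbr : V -> V -> PB;
  act_linl : forall (c : F) h k v, act (c *: h + k) v = c *: act h v + act k v;
  act_linr : forall h, lin1 (act h);
  act_mul : forall h k v, act (h * k) v = act h (act k v);
  act_one : forall v, act 1 v = v;
  vpar0 : forall p, vpar p 0;
  vparD : forall p v w, vpar p v -> vpar p w -> vpar p (v + w);
  vparZ : forall p (c : F) v, vpar p v -> vpar p (c *: v);
  vpar_dec : forall v, exists v0 v1, [/\ vpar false v0, vpar true v1 & v = v0 + v1];
  vpar_disj : forall v, vpar false v -> vpar true v -> v = 0;
  act_par : forall p h v, vpar p v -> vpar p (act h v);
  vmul_linl : forall b, lin1 (fun a => vmul a b);
  vmul_linr : forall a, lin1 (vmul a);
  vmulA : forall a b c, vmul a (vmul b c) = vmul (vmul a b) c;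
  vmul_par : forall p q a b, vpar p a -> vpar q b -> vpar (p (+) q) (vmul a b);
  vmul_scomm : forall p q a b, vpar p a -> vpar q b -> vmul a b = sgn p q *: vmul b a;
  act_vmul : forall h a b,
    act h (vmul a b) = \sum_(x <- cop Hh h) vmul (act x.1 a) (act x.2 b);
  pbr_linl : forall (c : F) a a' b,
    eqPB act (pbr (c *: a + a') b) (scalePB c (pbr a b) ++ pbr a' b);
  pbr_linr : forall (c : F) a b b',
    eqPB act (pbr a (c *: b + b')) (scalePB c (pbr a b) ++ pbr a b');
  pbr_par : forall p q a b, vpar p a -> vpar q b ->
    exists s : PB, eqPB act (pbr a b) s /\ (forall x, x \in s -> vpar (p (+) q) x.2);
  pbr_Hbil : forall f g a b,
    eqPB act (pbr (act f a) (act g b)) [seq (f * x.1.1, g * x.1.2, x.2) | x <- pbr a b];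
  pbr_skew : forall p q a b, vpar p a -> vpar q b ->
    eqPB act (pbr b a) [seq (x.1.2, x.1.1, (- sgn p q) *: x.2) | x <- pbr a b];
  pbr_jacobi : forall p q a b c, vpar p a -> vpar q b ->
    eqPB3 act (brL pbr a b c ++ scalePB3 (- sgn p q) (swap12 (brL pbr b a c)))
              (brR pbr a b c);
  pbr_leibniz : forall p q a b c, vpar p b -> vpar q c ->
    eqPB act (pbr a (vmul b c))
      (mulPBr act vmul (pbr a b) c ++ scalePB (sgn p q) (mulPBr act vmul (pbr a c) b))
}.

Variable P : poisson_pseudoalg.

(* product of a list of elements of V (None for the empty product) *)
Definition lprod (r : seq V) : option V :=
  if r is x :: s then Some (foldl (vmul P) x s) else None.

Definition omulPBl (o : option V) (B : PB) : PB :=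
  if o is Some a then mulPBl (act P) (vmul P) a B else B.
Definition omulPBr (B : PB) (o : option V) : PB :=
  if o is Some c then mulPBr (act P) (vmul P) B c else B.

Definition prodI (m : nat) (a : 'I_m -> V) : V := odflt 0 (lprod [seq a i | i <- enum 'I_m]).

Definition eps_ij (m n : nat) (pa : 'I_m -> bool) (pb : 'I_n -> bool) (i : 'I_m) (j : 'I_n) : F :=
  (-1) ^+ (pa i * (\sum_(k < m | (i < k)%N) pa k) + pb j * (\sum_(k < n | (k < j)%N) pb k))%N.

Definition rhs49 (m n : nat) (a : 'I_m -> V) (pa : 'I_m -> bool)
    (b : 'I_n -> V) (pb : 'I_n -> bool) : PB :=
  flatten [seq scalePB (eps_ij pa pb i j)
             (omulPBr (omulPBl (lprod [seq a k | k <- enum 'I_m & k != i]) (pbr P (a i) (b j)))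
                      (lprod [seq b k | k <- enum 'I_n & k != j]))
          | i <- enum 'I_m, j <- enum 'I_n].

End Pseudo.
End Defs.

(* Main.v *)
Require Import Defs.
From HB Require Import structures.
From mathcomp Require Import all_boot all_order all_algebra zify.
Set Implicit Arguments. Unset Strict Implicit. Unset Printing Implicit Defensive.
Import GRing.Theory.
Local Open Scope ring_scope.

Section Lin.
Variable F : fieldType.
Implicit Types A B W : lmodType F.

Lemma lin1_0 A W (f : A -> W) : lin1 f -> f 0 = 0.
Proof.
move=> Hf; have E := Hf 1 0 0; rewrite !scale1r addr0 in E.
by apply: (@addrI _ (f 0)); rewrite addr0 -E.
Qed.

Lemma lin1D A W (f : A -> W) x y : lin1 f -> f (x + y) = f x + f y.
Proof. by move=> Hf; have := Hf 1 x y; rewrite !scale1r. Qed.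

Lemma lin1Z A W (f : A -> W) c x : lin1 f -> f (c *: x) = c *: f x.
Proof. by move=> Hf; have := Hf c x 0; rewrite !addr0 (lin1_0 Hf) addr0. Qed.

Lemma lin1N A W (f : A -> W) x : lin1 f -> f (- x) = - f x.
Proof. by move=> Hf; rewrite -scaleN1r lin1Z // scaleN1r. Qed.

Lemma lin1_sumE A W (f : A -> W) I (r : seq I) (G : I -> A) :
  lin1 f -> f (\sum_(i <- r) G i) = \sum_(i <- r) f (G i).
Proof.
move=> Hf; elim: r => [|i r IH]; first by rewrite !big_nil lin1_0.
by rewrite !big_cons lin1D // IH.
Qed.

Lemma lin1_id A : lin1 (fun x : A => x).
Proof. by []. Qed.

Lemma lin1_comp A B W (f : B -> W) (g : A -> B) :
  lin1 f -> lin1 g -> lin1 (fun x => f (g x)).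
Proof. by move=> Hf Hg c x y; rewrite Hg Hf. Qed.

Lemma lin1_sum A W I (r : seq I) (G : A -> I -> W) :
  (forall i, lin1 (G^~ i)) -> lin1 (fun x => \sum_(i <- r) G x i).
Proof.
move=> HG c x y; rewrite scaler_sumr -big_split /=.
by apply: eq_bigr => i _; rewrite HG.
Qed.

Lemma lin1_add A W (f g : A -> W) : lin1 f -> lin1 g -> lin1 (fun x => f x + g x).
Proof.
move=> Hf Hg c x y; rewrite Hf Hg scalerDr.
by rewrite -!addrA; congr (_ + _); rewrite addrCA.
Qed.

Lemma lin1_scale A W (f : A -> W) k : lin1 f -> lin1 (fun x => k *: f x).
Proof. by move=> Hf c x y; rewrite Hf scalerDr !scalerA mulrC. Qed.

Lemma lin1_scaleE A W k : lin1 (fun x : A => k *: x : A).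
Proof. by move=> c x y; rewrite scalerDr !scalerA mulrC. Qed.

End Lin.

Section Hopf.
Variables (F : fieldType) (H : algType F) (Hh : cocomm_hopf H).
Local Notation cop := (cop Hh).
Local Notation cou := (cou Hh).
Local Notation ant := (ant Hh).
Implicit Types W A : lmodType F.

Lemma sum_pair W (G : H * H -> W) (r : seq (H * H)) :
  \sum_(z <- r) G (z.1, z.2) = \sum_(z <- r) G z.
Proof. by apply: eq_bigr => -[]. Qed.

Lemma eqT2_sum W (G : H * H -> W) s t : eqT2 s t -> bilin (fun u v => G (u, v)) ->
  \sum_(z <- s) G z = \sum_(z <- t) G z.
Proof. by move=> E HG; rewrite -(sum_pair G s) -(sum_pair G t); exact: (E W (fun u v => G (u, v)) HG). Qed.

Lemma sum_triple W (G : H * H * H -> W) (r : seq (H * H * H)) :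
  \sum_(z <- r) G (z.1.1, z.1.2, z.2) = \sum_(z <- r) G z.
Proof. by apply: eq_bigr => -[[]]. Qed.

Lemma eqT3_sum W (G : H * H * H -> W) s t : eqT3 s t -> trilin (fun u v w => G (u, v, w)) ->
  \sum_(z <- s) G z = \sum_(z <- t) G z.
Proof. by move=> E HG; rewrite -(sum_triple G s) -(sum_triple G t); exact: (E W (fun u v w => G (u, v, w)) HG). Qed.

Lemma cop_linE W (G : H * H -> W) c h k : bilin (fun u v => G (u, v)) ->
  \sum_(z <- cop (c *: h + k)) G z = c *: \sum_(z <- cop h) G z + \sum_(z <- cop k) G z.
Proof.
move=> HG; rewrite (eqT2_sum (cop_add Hh _ _) HG) big_cat /=; congr (_ + _).
rewrite (eqT2_sum (cop_scale Hh _ _) HG) big_map scaler_sumr; apply: eq_bigr => -[x y] _ /=.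
by rewrite (lin1Z _ _ (HG.1 y)).
Qed.

Lemma lin1_copid W (G : H * H -> W) : bilin (fun u v => G (u, v)) ->
  lin1 (fun h => \sum_(z <- cop h) G z).
Proof. by move=> HG c x y; rewrite cop_linE. Qed.

Lemma cop_sumE W (G : H * H -> W) I (r : seq I) (K : I -> H) : bilin (fun u v => G (u, v)) ->
  \sum_(z <- cop (\sum_(i <- r) K i)) G z = \sum_(i <- r) \sum_(z <- cop (K i)) G z.
Proof. by move=> HG; rewrite (lin1_sumE _ _ (lin1_copid HG)). Qed.

Lemma cop_scaleE W (G : H * H -> W) c h : bilin (fun u v => G (u, v)) ->
  \sum_(z <- cop (c *: h)) G z = c *: \sum_(z <- cop h) G z.
Proof. by move=> HG; rewrite (lin1Z _ _ (lin1_copid HG)). Qed.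

Lemma lin1_cop A W (g : A -> H) (G : H * H -> W) :
  bilin (fun u v => G (u, v)) -> lin1 g -> lin1 (fun x => \sum_(z <- cop (g x)) G z).
Proof. by move=> HG Hg c x y; rewrite Hg cop_linE. Qed.

Lemma coassocE W (G : H * H * H -> W) h : trilin (fun u v w => G (u, v, w)) ->
  \sum_(x <- cop h) \sum_(y <- cop x.1) G (y.1, y.2, x.2) =
  \sum_(x <- cop h) \sum_(y <- cop x.2) G (x.1, y.1, y.2).
Proof.
move=> HG; have := eqT3_sum (cop_coassoc Hh h) HG.
by rewrite !big_allpairs_dep.
Qed.

Lemma cocommE W (G : H * H -> W) h : bilin (fun u v => G (u, v)) ->
  \sum_(x <- cop h) G x = \sum_(x <- cop h) G (x.2, x.1).
Proof. by move=> HG; rewrite (eqT2_sum (cop_cocomm Hh h) HG) big_map. Qed.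

Lemma cop_mulE W (G : H * H -> W) h k : bilin (fun u v => G (u, v)) ->
  \sum_(z <- cop (h * k)) G z = \sum_(x <- cop h) \sum_(y <- cop k) G (x.1 * y.1, x.2 * y.2).
Proof. by move=> HG; rewrite (eqT2_sum (cop_mul Hh h k) HG) big_allpairs_dep. Qed.

Lemma cop_oneE W (G : H * H -> W) : bilin (fun u v => G (u, v)) ->
  \sum_(z <- cop 1) G z = G (1, 1).
Proof. by move=> HG; rewrite (eqT2_sum (cop_one Hh) HG) big_seq1. Qed.

Lemma lin1_mull k : lin1 (fun y : H => k * y).
Proof. by move=> c x y; rewrite mulrDr scalerAr. Qed.
Lemma lin1_mulr k : lin1 (fun y : H => y * k).
Proof. by move=> c x y; rewrite mulrDl scalerAl. Qed.
Lemma lin1_ant : lin1 ant.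
Proof. exact: ant_lin. Qed.
Lemma lin1_cou W (w : W) A (g : A -> H) : lin1 g -> lin1 (fun x => cou (g x) *: w).
Proof. by move=> Hg c x y; rewrite Hg cou_lin scalerDl scalerA. Qed.

End Hopf.

Create HintDb lindb.
#[export] Hint Resolve lin1_mull lin1_mulr lin1_ant lin1_id lin1_scaleE : lindb.

Ltac lin_atom := solve [eauto with lindb].

Ltac lin :=
  cbn [fst snd];
  match goal with
  | |- lin1 (fun x => x) => exact: lin1_id
  | |- lin1 (fun x => \sum_(z <- cop _ (@?g x)) @?G z) =>
       refine (@lin1_cop _ _ _ _ _ g G _ _); [bil | lin]
  | |- lin1 (fun x => \sum_(i <- ?r) @?G x i) =>
       refine (@lin1_sum _ _ _ _ r G _) => ?; lin
  | |- lin1 (fun x => cou _ (@?g x) *: ?w) => refine (@lin1_cou _ _ _ _ w _ g _); lin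
  | |- lin1 (fun x => ?k *: @?g x) => refine (@lin1_scale _ _ _ g k _); lin
  | |- lin1 (fun x => @?f x + @?g x) => refine (@lin1_add _ _ _ f g _ _); lin
  | |- lin1 (fun x => ?f (@?g x)) => refine (@lin1_comp _ _ _ _ f g _ _); [lin_atom | lin]
  | |- lin1 (fun x => ?f (@?g x) ?c) => refine (@lin1_comp _ _ _ _ (fun y => f y c) g _ _); [lin_atom | lin]
  | |- lin1 (fun x => ?f (@?g x) ?c ?d) => refine (@lin1_comp _ _ _ _ (fun y => f y c d) g _ _); [lin_atom | lin]
  | |- lin1 ?f => lin_atom
  end
with bil := split => ?; lin
with tril := split => ? ?; lin.

Section Hopf2.
Variables (F : fieldType) (H : algType F) (Hh : cocomm_hopf H).
Local Notation cop := (cop Hh).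
Local Notation cou := (cou Hh).
Local Notation ant := (ant Hh).
Implicit Types W A : lmodType F.

Lemma HC1 h L R : \sum_(c <- cop h) L * (ant c.1 * c.2) * R = cou h *: (L * R).
Proof. by rewrite -mulr_suml -mulr_sumr ant_l -scalerAr mulr1 -scalerAl. Qed.
Lemma HC2 h L R : \sum_(c <- cop h) L * (c.1 * ant c.2) * R = cou h *: (L * R).
Proof. by rewrite -mulr_suml -mulr_sumr ant_r -scalerAr mulr1 -scalerAl. Qed.

Lemma ant_mul x y : ant (x * y) = ant y * ant x.
Proof.
have L1 : ant (x * y) = \sum_(a <- cop x) \sum_(b <- cop y) (cou a.1 * cou b.1) *: ant (a.2 * b.2).
  rewrite -{1}(cou_l Hh (x * y)) (lin1_sumE _ _ (lin1_ant Hh)).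
  rewrite cop_mulE; last by bil.
  by apply: eq_bigr => a _; apply: eq_bigr => b _ /=; rewrite (lin1Z _ _ (lin1_ant Hh)) cou_mul.
pose T := \sum_(a <- cop x) \sum_(c <- cop a.1) \sum_(b <- cop y) \sum_(d <- cop b.1)
   ant d.1 * (ant c.1 * c.2) * (d.2 * ant (a.2 * b.2)).
have L2 : ant (x * y) = T.
  rewrite L1 /T; apply: eq_bigr => a _.
  rewrite exchange_big /=; apply: eq_bigr => b _.
  rewrite exchange_big /=.
  under eq_bigr => j _ do rewrite HC1.
  rewrite -scaler_sumr -scalerA; congr (_ *: _).
  under eq_bigr => j _ do rewrite mulrA -[ant j.1 * j.2]mul1r.
  by rewrite HC1 mul1r.
have L3 : T = \sum_(a <- cop x) \sum_(c <- cop a.2) \sum_(b <- cop y) \sum_(d <- cop b.2)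
    ant b.1 * (ant a.1 * c.1) * (d.1 * ant (c.2 * d.2)).
  rewrite /T (coassocE Hh (G := fun t => \sum_(b <- cop y) \sum_(d <- cop b.1)
     ant d.1 * (ant t.1.1 * t.1.2) * (d.2 * ant (t.2 * b.2)))); last by tril.
  apply: eq_bigr => a _; apply: eq_bigr => c _ /=.
  by rewrite (coassocE Hh (G := fun t => ant t.1.1 * (ant a.1 * c.1) * (t.1.2 * ant (c.2 * t.2)))); last by tril.
have L5 : forall a b : H * H, \sum_(c <- cop a.2) \sum_(d <- cop b.2)
    ant b.1 * (ant a.1 * c.1) * (d.1 * ant (c.2 * d.2)) = (cou a.2 * cou b.2) *: (ant b.1 * ant a.1).
  move=> a b.
  transitivity (\sum_(w <- cop (a.2 * b.2)) (ant b.1 * ant a.1) * (w.1 * ant w.2) * 1).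
    rewrite (cop_mulE Hh (G := fun w => (ant b.1 * ant a.1) * (w.1 * ant w.2) * 1)); last by bil.
    apply: eq_bigr => c _; apply: eq_bigr => d _ /=.
    by rewrite mulr1 !mulrA.
  by rewrite HC2 cou_mul mulr1.
rewrite L2 L3.
have -> : \sum_(a <- cop x) \sum_(c <- cop a.2) \sum_(b <- cop y) \sum_(d <- cop b.2)
    ant b.1 * (ant a.1 * c.1) * (d.1 * ant (c.2 * d.2)) =
  \sum_(a <- cop x) \sum_(b <- cop y) (cou a.2 * cou b.2) *: (ant b.1 * ant a.1).
  by apply: eq_bigr => a _; rewrite exchange_big; apply: eq_bigr => b _; rewrite L5.
rewrite -{2}(cou_r Hh x) -{2}(cou_r Hh y) !(lin1_sumE _ _ (lin1_ant Hh)) mulr_suml exchange_big.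
apply: eq_bigr => a _; rewrite mulr_sumr; apply: eq_bigr => b _.
by rewrite !(lin1Z _ _ (lin1_ant Hh)) -scalerAl -scalerAr scalerA mulrC.
Qed.
End Hopf2.

Section Mod.
Variables (F : fieldType) (H : algType F) (Hh : cocomm_hopf H) (V : lmodType F)
  (P : poisson_pseudoalg Hh V).
Local Notation cop := (cop Hh).
Local Notation cou := (cou Hh).
Local Notation ant := (ant Hh).
Local Notation act := (act P).
Local Notation vmul := (vmul P).
Implicit Types W A : lmodType F.

Lemma lin1_actl v : lin1 (fun h => act h v).
Proof. by move=> c x y; rewrite act_linl. Qed.
Lemma lin1_actr h : lin1 (act h).
Proof. exact: act_linr. Qed.
Lemma lin1_vmull v : lin1 (fun a => vmul a v).
Proof. exact: vmul_linl. Qed.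
Lemma lin1_vmulr v : lin1 (vmul v).
Proof. exact: vmul_linr. Qed.
Hint Resolve lin1_actl lin1_actr lin1_vmull lin1_vmulr : lindb.

Lemma act_couE h v : act (cou h *: 1) v = cou h *: v.
Proof. by rewrite (lin1Z _ _ (lin1_actl v)) act_one. Qed.

Definition modmul (mu : V -> V -> V) :=
  forall k u v, act k (mu u v) = \sum_(x <- cop k) mu (act x.1 u) (act x.2 v).

Lemma modmul_vmul : modmul vmul.
Proof. by move=> k u v; rewrite act_vmul. Qed.

Lemma modmul_vmulC : modmul (fun u v => vmul v u).
Proof.
move=> k u v; rewrite act_vmul (cocommE Hh (G := fun x => vmul (act x.1 v) (act x.2 u))) //.
by bil.
Qed.

Lemma I1 (mu : V -> V -> V) : bilin mu -> modmul mu -> forall h e w,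
  mu (act h e) w = \sum_(x <- cop h) act x.1 (mu e (act (ant x.2) w)).
Proof.
move=> [Mu1 Mu2] Hmu h e w.
under eq_bigr => x _ do rewrite Hmu.
rewrite (coassocE Hh (G := fun t => mu (act t.1.1 e) (act t.1.2 (act (ant t.2) w)))); last by tril.
have E : forall x : H * H, \sum_(y <- cop x.2) mu (act x.1 e) (act y.1 (act (ant y.2) w))
   = cou x.2 *: mu (act x.1 e) w.
  move=> x; rewrite -(lin1_sumE _ _ (Mu2 _)) -(lin1Z _ _ (Mu2 _)); congr (mu _ _).
  rewrite -act_couE -ant_r (lin1_sumE _ _ (lin1_actl _)).
  by apply: eq_bigr => y _; rewrite act_mul.
under eq_bigr => x _ do rewrite /= E -(lin1Z _ _ (Mu1 _)) -(lin1Z _ _ (lin1_actl _)).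
by rewrite -(lin1_sumE _ _ (Mu1 _)) -(lin1_sumE _ _ (lin1_actl _)) cou_r.
Qed.

Lemma bilin_vmulC : bilin (fun u v => vmul v u).
Proof. by split => ?; lin. Qed.
Lemma bilin_vmul : bilin vmul.
Proof. by split => ?; lin. Qed.

Lemma I1C h e w :
  vmul w (act h e) = \sum_(x <- cop h) act x.1 (vmul (act (ant x.2) w) e).
Proof. exact: (I1 bilin_vmulC modmul_vmulC). Qed.

Lemma M1 k c c' : act (ant k) (vmul c c') =
  \sum_(x <- cop k) vmul (act (ant x.1) c) (act (ant x.2) c').
Proof.
have S1 : act (ant k) (vmul c c') = \sum_(x <- cop k) \sum_(z <- cop x.2)
    act (ant x.1) (vmul c (act (z.1 * ant z.2) c')).
  symmetry.
  under eq_bigr => x _ do rewrite -(lin1_sumE _ _ (lin1_actr _)) -(lin1_sumE _ _ (lin1_vmulr _))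
    -(lin1_sumE _ _ (lin1_actl _)) ant_r act_couE (lin1Z _ _ (lin1_vmulr _))
    (lin1Z _ _ (lin1_actr _)) -(lin1Z _ _ (lin1_actl _)) -(lin1Z _ _ (lin1_ant Hh)).
  by rewrite -(lin1_sumE _ _ (lin1_actl _)) -(lin1_sumE _ _ (lin1_ant Hh)) cou_r.
rewrite S1.
under eq_bigr => x _ do under eq_bigr => z _ do
  rewrite act_mul I1C (lin1_sumE _ _ (lin1_actr _)).
have S3 : forall x : H * H, \sum_(z <- cop x.2) \sum_(i <- cop z.1)
    act (ant x.1) (act i.1 (vmul (act (ant i.2) c) (act (ant z.2) c'))) =
  \sum_(z <- cop x.2) \sum_(i <- cop z.2)
    act (ant x.1 * z.1) (vmul (act (ant i.1) c) (act (ant i.2) c')).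
  move=> x.
  under eq_bigr => z _ do under eq_bigr => i _ do rewrite -act_mul.
  by rewrite (coassocE Hh (G := fun t => act (ant x.1 * t.1.1)
    (vmul (act (ant t.1.2) c) (act (ant t.2) c')))); last by tril.
under eq_bigr => x _ do rewrite S3.
rewrite -(coassocE Hh (G := fun t => \sum_(i <- cop t.2)
    act (ant t.1.1 * t.1.2) (vmul (act (ant i.1) c) (act (ant i.2) c')))); last by tril.
under eq_bigr => x _ do rewrite /= exchange_big /=.
under eq_bigr => x _ do under eq_bigr => i _ do
  rewrite -(lin1_sumE _ _ (lin1_actl _)) ant_l act_couE.
under eq_bigr => x _ do rewrite -scaler_sumr.
transitivity (\sum_(i <- cop (\sum_(x <- cop k) cou x.1 *: x.2))
    vmul (act (ant i.1) c) (act (ant i.2) c')); last by rewrite cou_l.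
rewrite cop_sumE; last by bil.
by apply: eq_bigr => x _; rewrite cop_scaleE //; bil.
Qed.

End Mod.

Section PBs.
Variables (F : fieldType) (H : algType F) (Hh : cocomm_hopf H) (V : lmodType F)
  (P : poisson_pseudoalg Hh V).
Local Notation cop := (cop Hh).
Local Notation cou := (cou Hh).
Local Notation ant := (ant Hh).
Local Notation act := (act P).
Local Notation vmul := (vmul P).
Local Notation PB := (PB H V).
Implicit Types W A : lmodType F.
Hint Resolve lin1_actl lin1_actr lin1_vmull lin1_vmulr : lindb.

Definition Phi W (phi : H -> H -> V -> W) (s : PB) := \sum_(x <- s) phi x.1.1 x.1.2 x.2.
Definition good W (phi : H -> H -> V -> W) := trilin phi /\ balanced2 Hh act phi.

Lemma eqPB_Phi s t : eqPB Hh act s t -> forall W (phi : H -> H -> V -> W), good phi -> Phi phi s = Phi phi t.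
Proof. by move=> E W phi [T B]; apply: E. Qed.

Lemma Phi_eqPB s t : (forall W (phi : H -> H -> V -> W), good phi -> Phi phi s = Phi phi t) -> eqPB Hh act s t.
Proof. by move=> E W phi T B; apply: E. Qed.

Definition swp W (phi : H -> H -> V -> W) := fun f g d => phi g f d.

Lemma good_swp W (phi : H -> H -> V -> W) : good phi -> good (swp phi).
Proof.
move=> [[P1 P2 P3] B]; split; first by split=> ? ?; [exact: P2 | exact: P1 | exact: P3].
move=> f g h e; rewrite /swp -B.
rewrite (cocommE Hh (G := fun x => phi (g * x.2) (f * x.1) e)) //.
by split => ?; lin.
Qed.

Definition psi (mu : V -> V -> V) W (phi : H -> H -> V -> W) c :=
  fun f g d => \sum_(y <- cop g) phi f y.1 (mu d (act (ant y.2) c)).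
Definition mulPBmu (mu : V -> V -> V) (B : PB) c : PB :=
  [seq (x.1.1, y.1, mu x.2 (act (ant y.2) c)) | x <- B, y <- cop x.1.2].

Lemma Phi_mulPBmu mu W (phi : H -> H -> V -> W) B c :
  Phi phi (mulPBmu mu B c) = Phi (psi mu phi c) B.
Proof. by rewrite /Phi big_allpairs_dep. Qed.

Lemma good_psi (mu : V -> V -> V) W (phi : H -> H -> V -> W) c :
  bilin mu -> modmul P mu -> good phi -> good (psi mu phi c).
Proof.
move=> [Mu1 Mu2] Hmu [[P1 P2 P3] B]; split.
  by rewrite /psi; split => ? ?; lin.
move=> f g h e; rewrite /psi.
have S1 : forall x : H * H, \sum_(y <- cop (g * x.2)) phi (f * x.1) y.1 (mu e (act (ant y.2) c)) =
  \sum_(y <- cop g) \sum_(z <- cop x.2) phi (f * x.1) (y.1 * z.1) (mu e (act (ant z.2) (act (ant y.2) c))).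
  move=> x; rewrite (cop_mulE Hh (G := fun y => phi (f * x.1) y.1 (mu e (act (ant y.2) c)))); last by bil.
  by apply: eq_bigr => y _; apply: eq_bigr => z _; rewrite /= ant_mul act_mul.
under eq_bigr => x _ do rewrite S1.
rewrite exchange_big /=; apply: eq_bigr => y _.
rewrite -(coassocE Hh (G := fun t => phi (f * t.1.1) (y.1 * t.1.2)
   (mu e (act (ant t.2) (act (ant y.2) c))))); last by tril.
rewrite (I1 (conj Mu1 Mu2) Hmu) (lin1_sumE _ _ (P3 _ _)).
by apply: eq_bigr => x _; rewrite -B.
Qed.

Definition psiL W (phi : H -> H -> V -> W) a :=
  fun f g d => \sum_(y <- cop f) phi y.1 g (vmul (act (ant y.2) a) d).

Lemma Phi_mulPBl W (phi : H -> H -> V -> W) a B :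
  Phi phi (mulPBl Hh act vmul a B) = Phi (psiL phi a) B.
Proof. by rewrite /Phi big_allpairs_dep. Qed.

Lemma Phi_mulPBr W (phi : H -> H -> V -> W) B c :
  Phi phi (mulPBr Hh act vmul B c) = Phi (psi vmul phi c) B.
Proof. exact: Phi_mulPBmu. Qed.

Lemma good_psiv W (phi : H -> H -> V -> W) c : good phi -> good (psi vmul phi c).
Proof. by move=> G; apply: good_psi => //; [exact: bilin_vmul | exact: modmul_vmul]. Qed.

Lemma good_psiL W (phi : H -> H -> V -> W) a : good phi -> good (psiL phi a).
Proof.
move=> G; have -> : psiL phi a = swp (psi (fun u v => vmul v u) (swp phi) a) by [].
apply: good_swp; apply: good_psi; [exact: bilin_vmulC | exact: modmul_vmulC | exact: good_swp].
Qed.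

Definition opsi W (phi : H -> H -> V -> W) (o : option V) :=
  if o is Some c then psi vmul phi c else phi.
Definition opsiL W (phi : H -> H -> V -> W) (o : option V) :=
  if o is Some c then psiL phi c else phi.

Lemma Phi_omulPBr W (phi : H -> H -> V -> W) B o :
  Phi phi (omulPBr P B o) = Phi (opsi phi o) B.
Proof. by case: o => [c|] //=; rewrite Phi_mulPBr. Qed.
Lemma Phi_omulPBl W (phi : H -> H -> V -> W) B o :
  Phi phi (omulPBl P o B) = Phi (opsiL phi o) B.
Proof. by case: o => [c|] //=; rewrite Phi_mulPBl. Qed.
Lemma good_opsi W (phi : H -> H -> V -> W) o : good phi -> good (opsi phi o).
Proof. by case: o => [c|] //= G; apply: good_psiv. Qed.
Lemma good_opsiL W (phi : H -> H -> V -> W) o : good phi -> good (opsiL phi o).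
Proof. by case: o => [c|] //= G; apply: good_psiL. Qed.

Lemma Phi_cat W (phi : H -> H -> V -> W) s t : Phi phi (s ++ t) = Phi phi s + Phi phi t.
Proof. by rewrite /Phi big_cat. Qed.

Lemma Phi_scale W (phi : H -> H -> V -> W) c s : trilin phi ->
  Phi phi (scalePB c s) = c *: Phi phi s.
Proof.
move=> [P1 P2 P3]; rewrite /Phi big_map scaler_sumr; apply: eq_bigr => x _ /=.
by rewrite (lin1Z _ _ (P3 _ _)).
Qed.

Lemma Phi_flatten W (phi : H -> H -> V -> W) (L : seq PB) :
  Phi phi (flatten L) = \sum_(s <- L) Phi phi s.
Proof. by rewrite /Phi big_flatten. Qed.

Lemma C2 W (phi : H -> H -> V -> W) B c c' : trilin phi ->
  Phi phi (mulPBr Hh act vmul (mulPBr Hh act vmul B c) c') =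
  Phi phi (mulPBr Hh act vmul B (vmul c c')).
Proof.
move=> [P1 P2 P3]; rewrite !Phi_mulPBr /Phi; apply: eq_bigr => x _.
rewrite /psi.
under [RHS]eq_bigr => y _ do rewrite M1 (lin1_sumE _ _ (lin1_vmulr P _)) (lin1_sumE _ _ (P3 _ _)).
rewrite (coassocE Hh (G := fun t => phi x.1.1 t.1.1 (vmul (vmul x.2 (act (ant t.2) c))
   (act (ant t.1.2) c')))); last by tril.
apply: eq_bigr => y _ /=.
rewrite (cocommE Hh (G := fun z => phi x.1.1 y.1 (vmul (vmul x.2 (act (ant z.2) c))
   (act (ant z.1) c')))); last by bil.
by apply: eq_bigr => z _; rewrite vmulA.
Qed.

Definition omul (o : option V) y := if o is Some c then vmul c y else y.

Lemma C2o W (phi : H -> H -> V -> W) B o y : trilin phi ->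
  Phi phi (mulPBr Hh act vmul (omulPBr P B o) y) = Phi phi (omulPBr P B (Some (omul o y))).
Proof. by case: o => [c|] //= T; rewrite C2. Qed.

Lemma C5 W (phi : H -> H -> V -> W) a B c : trilin phi ->
  Phi phi (mulPBl Hh act vmul a (mulPBr Hh act vmul B c)) =
  Phi phi (mulPBr Hh act vmul (mulPBl Hh act vmul a B) c).
Proof.
move=> [P1 P2 P3]; rewrite Phi_mulPBl Phi_mulPBr Phi_mulPBr Phi_mulPBl /Phi.
apply: eq_bigr => x _; rewrite /psi /psiL exchange_big /=.
by apply: eq_bigr => w _; apply: eq_bigr => y _; rewrite vmulA.
Qed.

Lemma C5o W (phi : H -> H -> V -> W) o B o' : trilin phi ->
  Phi phi (omulPBl P o (omulPBr P B o')) = Phi phi (omulPBr P (omulPBl P o B) o').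
Proof. by case: o => [a|]; case: o' => [c|] //= T; rewrite C5. Qed.

Definition ovpar (po : bool) (o : option V) := if o is Some c then vpar P po c else po = false.

Lemma C7 W (phi : H -> H -> V -> W) (s : PB) r po o : trilin phi ->
  (forall x, x \in s -> vpar P r x.2) -> ovpar po o ->
  Phi (opsi (swp phi) o) s = sgn F r po *: Phi (swp (opsiL phi o)) s.
Proof.
move=> [P1 P2 P3] Hs; case: o => [c|] /= Hc; last first.
  by rewrite Hc /sgn andbF expr0 scale1r.
rewrite /Phi scaler_sumr big_seq [RHS]big_seq; apply: eq_bigr => x /Hs Hx.
rewrite /psi /swp /psiL scaler_sumr; apply: eq_bigr => y _.
by rewrite (vmul_scomm Hx (act_par _ Hc)) (lin1Z _ _ (P3 _ _)).
Qed.

Lemma skewPhi p q a b W (phi : H -> H -> V -> W) : vpar P p a -> vpar P q b -> good phi ->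
  Phi phi (pbr P b a) = - sgn F p q *: Phi (swp phi) (pbr P a b).
Proof.
move=> Ha Hb G; rewrite (eqPB_Phi (pbr_skew Ha Hb) G) /Phi big_map scaler_sumr.
case: G => [[_ _ P3] _].
by apply: eq_bigr => x _; rewrite /swp /= (lin1Z _ _ (P3 _ _)).
Qed.

Lemma leibPhi p q a b c W (phi : H -> H -> V -> W) : vpar P p b -> vpar P q c -> good phi ->
  Phi phi (pbr P a (vmul b c)) =
  Phi phi (mulPBr Hh act vmul (pbr P a b) c) + sgn F p q *: Phi phi (mulPBr Hh act vmul (pbr P a c) b).
Proof.
move=> Hb Hc G; rewrite (eqPB_Phi (pbr_leibniz a Hb Hc) G) Phi_cat Phi_scale //.
by case: G.
Qed.

Lemma swpK W (phi : H -> H -> V -> W) : swp (swp phi) = phi.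
Proof. by []. Qed.

End PBs.

Section S.
Variable F : fieldType.
Lemma sign_LE (A Q : bool) (X Y : nat) :
  - sgn F Q (odd (X + A + Y)) * ((-1) ^+ (A * X)%N * (sgn F (Q (+) A) (odd (X + Y)) * - sgn F A Q))
  = (-1) ^+ (A * Y)%N.
Proof.
rewrite !oddD oddb /sgn -[(-1) ^+ (A * X)%N]signr_odd -[(-1) ^+ (A * Y)%N]signr_odd !oddM oddb; move: (odd X) (odd Y) => x y.
case: A; case: Q; case: x; case: y; cbv [addb andb negb nat_of_bool];
  rewrite ?expr0 ?expr1 ?mulN1r ?mul1r ?mulr1 ?opprK ?mulrN ?mulNr ?opprK ?mulr1 ?mul1r //.
Qed.

End S.

Section Comb.
Variables (F : fieldType) (H : algType F) (Hh : cocomm_hopf H) (V : lmodType F)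
  (P : poisson_pseudoalg Hh V).
Local Notation cop := (cop Hh).
Local Notation act := (act P).
Local Notation vmul := (vmul P).
Local Notation PB := (PB H V).
Implicit Types W A : lmodType F.

Definition prodN (b : nat -> V) n := odflt 0 (lprod P [seq b k | k <- iota 0 n]).
Definition rmN (b : nat -> V) n j := lprod P [seq b k | k <- iota 0 n & k != j].

Lemma lprod_rcons s y : lprod P (rcons s y) = Some (omul P (lprod P s) y).
Proof. by case: s => [|x s] //=; rewrite foldl_rcons. Qed.

Lemma lprod_par (b : nat -> V) (pb : nat -> bool) (s : seq nat) :
  (forall k, k \in s -> vpar P (pb k) (b k)) ->
  ovpar P (odd (\sum_(k <- s) pb k)) (lprod P (map b s)).
Proof.
elim/last_ind: s => [|s x IH] Hs; first by rewrite big_nil.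
rewrite map_rcons lprod_rcons /= big_rcons /= oddD oddb.
have Hx : vpar P (pb x) (b x) by apply: Hs; rewrite mem_rcons mem_head.
have Hs' : forall k, k \in s -> vpar P (pb k) (b k).
  by move=> k Hk; apply: Hs; rewrite mem_rcons in_cons Hk orbT.
move: (IH Hs').
case: (lprod P (map b s)) => [c|] /= Hc; first exact: vmul_par Hc Hx.
by rewrite Hc.
Qed.

Lemma lprod_some (b : nat -> V) n : (0 < n)%N ->
  lprod P [seq b k | k <- iota 0 n] = Some (prodN b n).
Proof. by case: n. Qed.

Lemma iotaS0 n : iota 0 n.+1 = rcons (iota 0 n) n.
Proof. by rewrite -addn1 iotaD add0n cats1. Qed.

Lemma prodN_S b n : (0 < n)%N -> prodN b n.+1 = vmul (prodN b n) (b n).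
Proof. by move=> Hn; rewrite {1}/prodN iotaS0 map_rcons lprod_rcons lprod_some. Qed.

Lemma rmN_S b n j : (j < n)%N -> rmN b n.+1 j = Some (omul P (rmN b n j) (b n)).
Proof.
move=> Hj; rewrite /rmN iotaS0 filter_rcons.
have -> : (n != j) = true by apply/eqP => E; rewrite E ltnn in Hj.
by rewrite map_rcons lprod_rcons.
Qed.

Lemma filter_iota_lt n j : (n <= j)%N -> [seq k <- iota 0 n | k != j] = iota 0 n.
Proof.
move=> Hj; apply/all_filterP/allP => k; rewrite mem_iota => /andP[_ Hk].
by apply/eqP => E; rewrite E in Hk; move: (leq_trans Hk Hj); rewrite ltnn.
Qed.

Lemma rmN_last b n : rmN b n.+1 n = lprod P [seq b k | k <- iota 0 n].
Proof. by rewrite /rmN iotaS0 filter_rcons eqxx filter_iota_lt. Qed.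

Lemma rmN_split m i : (i < m)%N ->
  [seq k <- iota 0 m | k != i] = iota 0 i ++ iota i.+1 (m - i.+1).
Proof.
move=> Hi; have -> : m = i + (m - i.+1).+1 by lia.
rewrite iotaD add0n /= filter_cat /= eqxx filter_iota_lt //.
have -> : (i + (m - i.+1).+1 - i.+1 = m - i.+1)%N by lia.
congr (_ ++ _); apply/all_filterP/allP => k; rewrite mem_iota => /andP[Hk _].
by apply/eqP => E; rewrite E ltnn in Hk.
Qed.

Lemma sum_iota (G : nat -> nat) n : (\sum_(0 <= k < n) G k = \sum_(k <- iota 0 n) G k)%N.
Proof. by rewrite /index_iota subn0. Qed.

Lemma sgn_mul (p : bool) S : (-1) ^+ (p * S)%N = sgn F (odd S) p.
Proof. by rewrite /sgn -signr_odd oddM oddb andbC. Qed.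

Lemma prodN_par (b : nat -> V) (pb : nat -> bool) n : (0 < n)%N ->
  (forall k, (k < n)%N -> vpar P (pb k) (b k)) ->
  vpar P (odd (\sum_(0 <= k < n) pb k)) (prodN b n).
Proof.
move=> Hn Hb; have := @lprod_par b pb (iota 0 n).
rewrite lprod_some // sum_iota /=; apply=> k; rewrite mem_iota => /andP[_ Hk].
exact: Hb.
Qed.

Lemma RE (b : nat -> V) (pb : nat -> bool) n x : (0 < n)%N ->
  (forall k, (k < n)%N -> vpar P (pb k) (b k)) ->
  forall W (phi : H -> H -> V -> W), good P phi ->
  Phi phi (pbr P x (prodN b n)) = \sum_(0 <= j < n)
    ((-1) ^+ (pb j * \sum_(0 <= k < j) pb k)%N) *: Phi phi (omulPBr P (pbr P x (b j)) (rmN b n j)).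
Proof.
elim: n => [//|n IH] Hn Hb W phi G.
case: (posnP n) => [En|npos].
  subst n; rewrite big_nat1 /rmN /= big_geq // muln0 expr0 scale1r.
  by rewrite /prodN /=.
have Hb' : forall k, (k < n)%N -> vpar P (pb k) (b k) by move=> k Hk; apply: Hb; apply: ltnW.
rewrite prodN_S // (leibPhi x (prodN_par npos Hb') (Hb n (ltnSn n)) G).
rewrite big_nat_recr //=; congr (_ + _).
  rewrite Phi_mulPBr (IH npos Hb' _ _ (good_psiv _ G)).
  apply: eq_big_nat => j /andP[_ Hj].
  by rewrite -Phi_mulPBr C2o ?rmN_S //; case: G.
by rewrite rmN_last lprod_some //= sgn_mul.
Qed.

Lemma LE (a : nat -> V) (pa : nat -> bool) m y q : (0 < m)%N ->
  (forall k, (k < m)%N -> vpar P (pa k) (a k)) -> vpar P q y ->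
  forall W (phi : H -> H -> V -> W), good P phi ->
  Phi phi (pbr P (prodN a m) y) = \sum_(0 <= i < m)
    ((-1) ^+ (pa i * \sum_(i.+1 <= k < m) pa k)%N) *: Phi phi (omulPBl P (rmN a m i) (pbr P (a i) y)).
Proof.
move=> Hm Ha Hy W phi G.
rewrite (skewPhi Hy (prodN_par Hm Ha) G) (RE _ Hm Ha (good_swp G)) scaler_sumr.
apply: eq_big_nat => i /andP[_ Hi].
have [s [Es Hs]] := pbr_par Hy (Ha i Hi).
have HL : ovpar P (odd (\sum_(k <- [seq k <- iota 0 m | k != i]) pa k)) (rmN a m i).
  apply: lprod_par => k; rewrite mem_filter mem_iota => /andP[_ /andP[_ Hk]].
  exact: Ha.
rewrite Phi_omulPBr (eqPB_Phi Es (good_opsi _ (good_swp G))).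
rewrite (C7 G.1 Hs HL).
rewrite -(eqPB_Phi Es (good_swp (good_opsiL _ G))).
rewrite (skewPhi (Ha i Hi) Hy (good_swp (good_opsiL _ G))) swpK -Phi_omulPBl.
rewrite !scalerA; congr (_ *: _).
rewrite rmN_split // big_cat /= (big_cat_nat _ (n := i)) //= ?(ltnW Hi) //.
rewrite (@big_ltn _ _ _ i m _ Hi) -sum_iota addnA -!mulrA.
exact: sign_LE.
Qed.

End Comb.

Lemma conv_map (T : Type) M (f : 'I_M.+1 -> T) :
  [seq f k | k <- enum 'I_M.+1] = [seq f (inord k) | k <- iota 0 M.+1].
Proof. by rewrite -val_enum_ord -map_comp; apply: eq_map => k /=; rewrite inord_val. Qed.


Lemma conv_filter (T : Type) M (f : 'I_M.+1 -> T) (i : 'I_M.+1) :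
  [seq f k | k <- enum 'I_M.+1 & k != i] = [seq f (inord k) | k <- iota 0 M.+1 & k != nat_of_ord i].
Proof.
transitivity [seq f (inord k) | k <- map val [seq k <- enum 'I_M.+1 | k != i]].
  by rewrite -map_comp; apply: eq_map => k /=; rewrite inord_val.
by rewrite -val_enum_ord [X in _ = map _ X]filter_map.
Qed.

Lemma conv_sum (R : nmodType) M (G : 'I_M.+1 -> R) :
  \sum_(i <- enum 'I_M.+1) G i = \sum_(0 <= k < M.+1) G (inord k).
Proof.
by rewrite /index_iota subn0 -val_enum_ord [RHS]big_map; apply: eq_bigr => i _; rewrite inord_val.
Qed.

Lemma conv_sumL M (f : 'I_M.+1 -> nat) (i : nat) : (i < M.+1)%N ->
  (\sum_(k < M.+1 | (i < k)%N) f k = \sum_(i.+1 <= k < M.+1) f (inord k))%N.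
Proof.
move=> Hi.
rewrite (eq_bigr (fun k : 'I_M.+1 => f (inord k))); last by move=> k _; rewrite inord_val.
rewrite -(big_mkord (fun k => i < k)%N (fun k => f (inord k))).
rewrite (big_cat_nat _ (n := i.+1)) //= big_nat_cond big1 ?add0n; last first.
  by move=> k /andP[/andP[_ Hk1] Hk2]; move: (leq_trans Hk2 Hk1); rewrite ltnn.
rewrite big_nat_cond [RHS]big_nat_cond; apply: eq_bigl => k.
by rewrite andbT; apply/andb_idr => /andP[].
Qed.

Lemma conv_sumR M (f : 'I_M.+1 -> nat) (j : nat) : (j < M.+1)%N ->
  (\sum_(k < M.+1 | (k < j)%N) f k = \sum_(0 <= k < j) f (inord k))%N.
Proof.
move=> Hj.
rewrite (eq_bigr (fun k : 'I_M.+1 => f (inord k))); last by move=> k _; rewrite inord_val.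
rewrite -(big_mkord (fun k => k < j)%N (fun k => f (inord k))).
rewrite (big_cat_nat _ (n := j)) //= ?(ltnW Hj) // [X in (_ + X)%N]big_nat_cond [X in (_ + X)%N]big1 ?addn0; last first.
  by move=> k /andP[/andP[Hk1 _] Hk2]; move: (leq_trans Hk2 Hk1); rewrite ltnn.
rewrite big_nat_cond [RHS]big_nat_cond; apply: eq_bigl => k.
by rewrite andbT; apply/andb_idr => /andP[].
Qed.

Unset Implicit Arguments.

Theorem proposition4p9 (F : fieldType) (charF : [pchar F] =i pred0)
  (H : algType F) (Hh : cocomm_hopf H) (V : lmodType F) (P : poisson_pseudoalg Hh V)
  (m n : nat) (a : 'I_m -> V) (pa : 'I_m -> bool) (b : 'I_n -> V) (pb : 'I_n -> bool) :
  (0 < m)%N -> (0 < n)%N ->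
  (forall i, vpar P (pa i) (a i)) -> (forall j, vpar P (pb j) (b j)) ->
  eqPB Hh (act P) (pbr P (prodI P a) (prodI P b)) (rhs49 P a pa b pb).
Proof.
case: m a pa => [//|M] a pa; case: n b pb => [//|N] b pb Hm Hn Ha Hb.
pose a' k := a (inord k); pose pa' k := pa (inord k).
pose b' k := b (inord k); pose pb' k := pb (inord k).
have Ha' : forall k, (k < M.+1)%N -> vpar P (pa' k) (a' k) by move=> k _; exact: Ha.
have Hb' : forall k, (k < N.+1)%N -> vpar P (pb' k) (b' k) by move=> k _; exact: Hb.
have EA : prodI P a = prodN P a' M.+1 by rewrite /prodI conv_map.
have EB : prodI P b = prodN P b' N.+1 by rewrite /prodI conv_map.
apply: Phi_eqPB => W phi G.
rewrite EA EB (LE Hm Ha' (prodN_par Hn Hb') G).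
rewrite /rhs49 Phi_flatten big_allpairs_dep conv_sum.
apply: eq_big_nat => i /andP[_ Hi].
rewrite Phi_omulPBl (RE _ Hn Hb' (good_opsiL _ G)) scaler_sumr conv_sum.
apply: eq_big_nat => j /andP[_ Hj].
rewrite -Phi_omulPBl C5o; last by case: G.
rewrite Phi_scale; last by case: G.
rewrite scalerA /eps_ij exprD !conv_filter (inordK Hi) (inordK Hj) conv_sumL // conv_sumR //.
Qed.
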